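(* Let $k, r, a, b, m, n$ be integers satisfying $$k\geq 1,\quad 0\leq a\leq m,\quad \max\{0,ka-r\}<b\leq n,\quad n>km-r.$$ Let $\mathcal{L}_{k,r}(a,b;m,n)$ be the set of lattice paths from $(a,b)$ to $(m,n)$ with unit steps $(1,0)$ and $(0,1)$ that stay strictly above the line $y=kx-r$. Then $$|\mathcal{L}_{k,r}(a,b;m,n)|=\sum_{i=0}^{\lfloor\frac{b+r-1-ka}{k+1}\rfloor}(-1)^i\,\frac{n+r-km}{m+n+r-(k+1)(a+i)}\binom{m+n+r-(k+1)(a+i)}{m-a-i}\binom{b+r-1-k(a+i)}{i}.$$
   Context: A path stays strictly above the line $y=kx-r$ if every lattice point $(x,y)$ on it satisfies $y> kx-r$. $\lfloor x\rfloor$ is the floor function. Binomial coefficients $\binom{N}{j}$ with $N\ge0$ equal $0$ when $j<0$ or $j>N$. *)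

(* Defs.v *)
From HB Require Import structures.
From mathcomp Require Import all_boot all_order all_algebra.
Set Implicit Arguments. Unset Strict Implicit. Unset Printing Implicit Defensive.
Import Order.TTheory GRing.Theory Num.Theory.
Local Open Scope ring_scope.

(* A lattice path is encoded by its sequence of unit steps:
   true = (1,0) (east), false = (0,1) (north). *)

Fixpoint path_end (x y : int) (s : seq bool) : int * int :=
  match s with
  | [::] => (x, y)
  | st :: s' => if st then path_end (x + 1) y s' else path_end x (y + 1) s'
  end.

Fixpoint strictly_above (k r x y : int) (s : seq bool) : bool :=
  (k * x - r < y) &&
  match s with
  | [::] => true
  | st :: s' => if st then strictly_above k r (x + 1) y s'
                else strictly_above k r x (y + 1) s'
  end.

Definition nsteps (a b m n : int) : nat := `|m - a|%N + `|n - b|%N.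

Definition Lpaths (k r a b m n : int) : {set (nsteps a b m n).-tuple bool} :=
  [set t : (nsteps a b m n).-tuple bool |
     (path_end a b t == (m, n)) && strictly_above k r a b t].

(* binomial coefficient with integer arguments, for N >= 0;
   equals 0 when j < 0 or j > N (value for N < 0 is irrelevant here). *)
Definition binz (N j : int) : int :=
  if (0 <= N) && (0 <= j) then ('C(`|N|, `|j|))%:Z else 0.

(* Main.v *)
Require Import Defs.
From HB Require Import structures.
From mathcomp Require Import all_boot all_order all_algebra.
From mathcomp Require Import ring lra zify.
Import Order.TTheory GRing.Theory Num.Theory.
Local Open Scope ring_scope.

Lemma binz_negl N j : N < 0 -> binz N j = 0.
Proof. by rewrite /binz => h; rewrite leNgt h. Qed.
Lemma binz_negr N j : j < 0 -> binz N j = 0.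
Proof. by rewrite /binz => h; rewrite (leNgt 0 j) h andbF. Qed.
Lemma binz_nat (n j : nat) : binz n%:Z j%:Z = ('C(n, j))%:Z.
Proof. by []. Qed.
Lemma binz_gt N j : N < j -> binz N j = 0.
Proof.
case: (ltP N 0) => [h _|]; first exact: binz_negl.
case: N => // n _; case: j => [j|j] h; last by rewrite binz_negr.
by rewrite binz_nat bin_small //; move: h; rewrite ltz_nat.
Qed.
Lemma binz_0 N : 0 <= N -> binz N 0 = 1.
Proof. by case: N => // n _; rewrite (binz_nat n 0) bin0. Qed.

Lemma binz_pascal N j : (N = -1 -> j != 0) ->
  binz (N + 1) j = binz N j + binz N (j - 1).
Proof.
case: N => [n|n] hN.
- case: j hN => [j|j] hN.
  + rewrite -PoszD addn1; case: j hN => [|j] hN.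
    * by rewrite !binz_nat !bin0 binz_negr.
    * have -> : (Posz j.+1 - 1) = Posz j by rewrite -addn1 PoszD addrK.
      by rewrite !binz_nat binS PoszD addrC.
  + by rewrite !binz_negr //; lia.
- case: n hN => [|n] hN.
  + have -> : Negz 0 + 1 = 0 by [].
    case: j hN => [j|j] hN; last by rewrite !binz_negr //; lia.
    case: j hN => [|j] hN; first by move: (hN erefl).
    by rewrite binz_nat bin0n !binz_negl.
  + by rewrite !binz_negl //; lia.
Qed.
Definition bet (k p q : int) : int := binz (p + q) p - (k + 1) * binz (p + q - 1) (p - 1).
Definition F (k : int) (M : nat) (N d : int) : int :=
  \sum_(i < M.+1) (-1) ^+ i * bet k (M%:Z - i%:Z) (N + d + 1 - k * i%:Z) * binz (d - k * i%:Z) i%:Z.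

Lemma bet_negp k p q : p < 0 -> bet k p q = 0.
Proof. by move=> h; rewrite /bet !binz_negr ?mulr0 ?subr0 //; lia. Qed.

Lemma bet_pascal k p q : 0 <= k -> 1 <= q - k * p ->
  bet k p q = bet k (p - 1) q + bet k p (q - 1).
Proof.
move=> hk h; rewrite /bet.
have E1 : binz (p + q) p = binz (p + q - 1) p + binz (p + q - 1) (p - 1).
  rewrite -(binz_pascal (p + q - 1) p) ?subrK //.
  by move=> hh; apply/negP => /eqP hp; move: h; rewrite hp; lia.
have E2 : binz (p + q - 1) (p - 1) = binz (p + q - 1 - 1) (p - 1) + binz (p + q - 1 - 1) (p - 1 - 1).
  rewrite -(binz_pascal (p + q - 1 - 1) (p - 1)) ?subrK //.
  move=> hh; apply/negP => /eqP hp.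
  have hp1 : p = 1 by lia.
  move: h; rewrite hp1; lia.
rewrite E1 E2.
have -> : p - 1 + q - 1 = p + q - 1 - 1 by ring.
have -> : p - 1 + q = p + q - 1 by ring.
have -> : p + (q - 1) = p + q - 1 by ring.
have -> : p + q - 1 - 1 = p + q - 1 - 1 by ring.
rewrite E2; ring.
Qed.
Lemma PoszS (n : nat) : (n.+1 : int) = n%:Z + 1.
Proof. by rewrite -addn1 PoszD. Qed.

Lemma F_first k M N d : 0 <= d ->
  F k M.+1 N d = F k M N (d - k) + F k M.+1 (N - 1) (d + 1).
Proof.
move=> hd; rewrite /F.
have step : forall i : nat,
  (-1) ^+ i * bet k (M.+1%:Z - i%:Z) (N - 1 + (d + 1) + 1 - k * i%:Z) * binz (d + 1 - k * i%:Z) i%:Z =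
  (-1) ^+ i * bet k (M.+1%:Z - i%:Z) (N + d + 1 - k * i%:Z) * binz (d - k * i%:Z) i%:Z +
  (-1) ^+ i * bet k (M.+1%:Z - i%:Z) (N + d + 1 - k * i%:Z) * binz (d - k * i%:Z) (i%:Z - 1).
  move=> i.
  have -> : N - 1 + (d + 1) + 1 - k * i%:Z = N + d + 1 - k * i%:Z by ring.
  have -> : d + 1 - k * i%:Z = (d - k * i%:Z) + 1 by ring.
  rewrite binz_pascal; first by ring.
  move=> hh; apply/negP => /eqP [] hi; move: hh; rewrite hi mulr0 subr0 => hh; lia.
under [X in _ = _ + X]eq_bigr do rewrite step.
rewrite big_split /= [X in _ = _ + (_ + X)]big_ord_recl /=.
rewrite [binz _ (_ - 1)]binz_negr ?mulr0 ?add0r; last first.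
  exact: ltrN10.
rewrite addrCA -big_split /= [X in _ = _ + X]big1 ?addr0 // => j _.
rewrite /bump leq0n add1n !PoszS exprS.
have -> : M%:Z + 1 - (j%:Z + 1) = M%:Z - j%:Z by ring.
have -> : N + (d - k) + 1 - k * j%:Z = N + d + 1 - k * (j%:Z + 1) by ring.
have -> : d - k - k * j%:Z = d - k * (j%:Z + 1) by ring.
have -> : j%:Z + 1 - 1 = j%:Z by ring.
ring.
Qed.
Lemma F_last k M N d : 0 <= k -> 1 <= N + d + 1 - k * M.+1%:Z ->
  F k M.+1 N d = F k M N d + F k M.+1 (N - 1) d.
Proof.
move=> hk hA; rewrite /F.
have step : forall i : nat,
  (-1) ^+ i * bet k (M.+1%:Z - i%:Z) (N + d + 1 - k * i%:Z) * binz (d - k * i%:Z) i%:Z =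
  (-1) ^+ i * bet k (M.+1%:Z - i%:Z - 1) (N + d + 1 - k * i%:Z) * binz (d - k * i%:Z) i%:Z +
  (-1) ^+ i * bet k (M.+1%:Z - i%:Z) (N - 1 + d + 1 - k * i%:Z) * binz (d - k * i%:Z) i%:Z.
  move=> i; rewrite (bet_pascal _ _ _ hk); last first.
    have -> : N + d + 1 - k * i%:Z - k * (M.+1%:Z - i%:Z) = N + d + 1 - k * M.+1%:Z by ring.
    exact: hA.
  have -> : N - 1 + d + 1 - k * i%:Z = N + d + 1 - k * i%:Z - 1 by ring.
  ring.
under eq_bigr do rewrite step.
rewrite big_split /= big_ord_recr /= bet_negp ?mul0r ?mulr0 ?addr0; last first.
  by rewrite subrr sub0r ltrN10.
rewrite mul0r addr0; congr (_ + _); apply: eq_bigr => i _.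
by rewrite PoszS addrAC addrK.
Qed.

Lemma bet_diag k p : 0 <= k -> 0 < p -> bet k p (k * p) = 0.
Proof.
case: k => // k _; case: p => // [[|p]] // _.
set n' := (p + k * p.+1)%N.
have e1 : p.+1%:Z + k%:Z * p.+1%:Z = n'.+1%:Z by rewrite /n' !PoszS PoszD PoszM PoszS; ring.
have e2 : p.+1%:Z + k%:Z * p.+1%:Z - 1 = n'%:Z by rewrite e1 PoszS addrK.
have e3 : p.+1%:Z - 1 = p%:Z by rewrite PoszS addrK.
rewrite /bet e1 e2 e3 !binz_nat.
have hC : 'C(n'.+1, p.+1) = (k.+1 * 'C(n', p))%N.
  apply/eqP; rewrite -(eqn_pmul2l (ltn0Sn p)) -mul_bin_diag.
  have -> : n'.+1 = (k.+1 * p.+1)%N by rewrite /n'; ring.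
  by rewrite mulnCA mulnA.
by rewrite hC PoszM PoszS subrr.
Qed.

Lemma F_vanish k M N d : 0 <= k -> -1 <= N -> (0 < M)%N -> N + d + 1 = k * M%:Z ->
  F k M N d = 0.
Proof.
move=> hk hN hM hA; rewrite /F big_ord_recr /= big1 ?add0r.
  rewrite binz_gt ?mulr0 //; lia.
move=> i _ /=.
have -> : N + d + 1 - k * i%:Z = k * (M%:Z - i%:Z) by rewrite mulrBr -hA; ring.
rewrite bet_diag // ?mulr0 ?mul0r //.
have := ltn_ord i; rewrite -ltz_nat; lia.
Qed.

Lemma F_dneg k M N d : 0 <= k -> d < 0 -> F k M N d = 0.
Proof.
move=> hk hd; rewrite /F big1 // => i _; rewrite binz_negl ?mulr0 //; nia.
Qed.

Lemma F_M0 k N d : 0 <= d -> 0 <= N + d + 1 -> F k 0 N d = 1.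
Proof.
move=> hd hq; rewrite /F big_ord1 /= /bet !mulr0 !subr0 !add0r binz_0 // binz_0 //.
by rewrite binz_negr ?mulr0 ?subr0 ?mulr1.
Qed.

Lemma F_N0 k M d : 0 <= k -> k * M%:Z <= d -> F k M 0 d = 1.
Proof.
move=> hk; elim: M d => [|M IH] d hd.
  by apply: F_M0; lia.
have main : forall e : nat, F k M.+1 0 (k * M.+1%:Z + e%:Z) = 1.
  elim=> [|e IHe].
    rewrite addr0 F_last //; last by lia.
    rewrite (@F_vanish k M.+1 (0 - 1)) //; last by lia.
    rewrite addr0 IH //; rewrite PoszS; lia.
  have h1 : F k M 0 (k * M.+1%:Z + e%:Z - k) = 1 by apply: IH; rewrite PoszS; lia.
  have h2 : F k M 0 (k * M.+1%:Z + e%:Z + 1) = 1 by apply: IH; rewrite PoszS; lia.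
  have hd0 : 0 <= k * M.+1%:Z + e%:Z by nia.
  have hF := @F_first k M 0 _ hd0.
  rewrite IHe h1 in hF.
  rewrite (PoszS e) addrA F_last //; last by nia.
  by rewrite h2 [in RHS]hF.
have -> : d = k * M.+1%:Z + (absz (d - k * M.+1%:Z)%R)%:Z.
  rewrite gez0_abs; [ring | lia].
exact: main.
Qed.
Lemma card_cons l (P : pred (seq bool)) :
  #|[set t : l.+1.-tuple bool | P t]| =
  (#|[set t : l.-tuple bool | P (true :: t)]| + #|[set t : l.-tuple bool | P (false :: t)]|)%N.
Proof.
have inj b : injective (fun t : l.-tuple bool => cons_tuple b t).
  by move=> t1 t2 /(congr1 val) /= [] /val_inj.
set A1 := [set t : l.-tuple bool | P (true :: t)].
set A2 := [set t : l.-tuple bool | P (false :: t)].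
have -> : [set t : l.+1.-tuple bool | P t] =
   [set cons_tuple true t | t in A1] :|: [set cons_tuple false t | t in A2].
  apply/setP => t; case/tupleP: t => x t.
  rewrite !inE; case: x => /=.
  - rewrite (mem_imset _ _ (inj true)) inE.
    case: (P (true :: t)) => //=; apply/esym/negbTE/imsetP => [[u _]].
    by move/(congr1 val) => /= [].
  - rewrite (mem_imset _ _ (inj false)) inE.
    case: (P (false :: t)); rewrite ?orbT //= orbF; apply/esym/negbTE/imsetP => [[u _]].
    by move/(congr1 val) => /= [].
rewrite cardsU !card_imset //.
have -> : [set cons_tuple true t | t in A1] :&: [set cons_tuple false t | t in A2] = set0.
  apply/setP => t; rewrite !inE; apply/negbTE/andP => [[/imsetP [u _ ->] /imsetP [v _]]].
  by move/(congr1 val) => /= [].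
by rewrite cards0 subn0.
Qed.

Definition Pp (k r m n x y : int) (s : seq bool) : bool :=
  (path_end x y s == (m, n)) && strictly_above k r x y s.
Definition Cnt k r m n (l : nat) x y := #|[set t : l.-tuple bool | Pp k r m n x y t]|.

Lemma Pp_true k r m n x y s : Pp k r m n x y (true :: s) = (k * x - r < y) && Pp k r m n (x + 1) y s.
Proof. by rewrite /Pp /= andbCA. Qed.
Lemma Pp_false k r m n x y s : Pp k r m n x y (false :: s) = (k * x - r < y) && Pp k r m n x (y + 1) s.
Proof. by rewrite /Pp /= andbCA. Qed.

Lemma Cnt_S k r m n l x y : Cnt k r m n l.+1 x y =
  if k * x - r < y then (Cnt k r m n l (x + 1) y + Cnt k r m n l x (y + 1))%N else 0%N.
Proof.
rewrite /Cnt card_cons; case: ifP => h.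
  by congr (_ + _)%N; apply: eq_card => t; rewrite !inE ?Pp_true ?Pp_false h.
have z : forall b, #|[set t : l.-tuple bool | Pp k r m n x y (b :: t)]| = 0%N.
  move=> b; apply/eqP; rewrite cards_eq0; apply/eqP/setP => t.
  by rewrite !inE; case: b; rewrite ?Pp_true ?Pp_false h.
by rewrite !z.
Qed.

Lemma Cnt_0 k r m n x y : Cnt k r m n 0 x y = ((x == m) && (y == n) && (k * x - r < y) : nat).
Proof.
rewrite /Cnt.
have e : forall t : 0.-tuple bool, Pp k r m n x y t = ((x == m) && (y == n) && (k * x - r < y)).
  by move=> t; rewrite (tuple0 t) /Pp /= andbT xpair_eqE.
under eq_finset => t do rewrite e.
case: ((x == m) && (y == n) && (k * x - r < y)) => /=.
  by rewrite (_ : [set t : 0.-tuple bool | true] = setT) ?cardsT ?card_tuple //; apply/setP => t; rewrite inE.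
by rewrite (_ : [set t : 0.-tuple bool | false] = set0) ?cards0 //; apply/setP => t; rewrite inE.
Qed.

Lemma path_end_ge x y s : x <= (path_end x y s).1 /\ y <= (path_end x y s).2.
Proof.
elim: s x y => [|[] s IH] x y /=; first by [].
- by case: (IH (x + 1) y) => h1 h2; split => //; apply: le_trans h1; lia.
- by case: (IH x (y + 1)) => h1 h2; split => //; apply: le_trans h2; lia.
Qed.

Lemma Cnt_out k r m n l x y : (m < x) || (n < y) -> Cnt k r m n l x y = 0%N.
Proof.
move=> h; rewrite /Cnt (_ : [set t : l.-tuple bool | _] = set0) ?cards0 //.
apply/setP => t; rewrite !inE /Pp.
case: (path_end_ge x y t); case: (path_end x y t) => u v /= h1 h2.
rewrite xpair_eqE; apply/negbTE/negP => /andP [/andP [/eqP e1 /eqP e2] _].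
move: h; rewrite -e1 -e2; lia.
Qed.
Lemma Cnt_below k r m n l x y : ~~ (k * x - r < y) -> Cnt k r m n l x y = 0%N.
Proof.
move=> h; case: l => [|l]; first by rewrite Cnt_0 (negbTE h) andbF.
by rewrite Cnt_S (negbTE h).
Qed.

Lemma Cnt_F k r m n : 1 <= k -> k * m - r < n -> forall (l : nat) (x y : int),
  x <= m -> y <= n -> (m - x) + (n - y) = l%:Z -> k * x - r < y ->
  (Cnt k r m n l x y)%:Z = F k (absz (m - x)%R) (n - y) (y + r - 1 - k * x).
Proof.
move=> hk hn; elim=> [|l IH] x y hx hy hl hxy.
  have ex : x = m by lia.
  have ey : y = n by lia.
  subst x y; rewrite Cnt_0 !eqxx hxy subrr /=.
  by rewrite F_M0 //; lia.
rewrite Cnt_S hxy PoszD.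
have [ex|ltx] := eqVneq x m.
  subst x; rewrite Cnt_out ?ltrDl // add0r.
  rewrite IH //; try lia.
  rewrite subrr !F_M0 //; lia.
have [M hM] : exists M : nat, m - x = M.+1%:Z.
  by exists (absz (m - x - 1)%R); rewrite PoszS gez0_abs; [ring | lia].
rewrite hM /=.
have hX : (Cnt k r m n l (x + 1) y)%:Z = F k M (n - y) (y + r - 1 - k * x - k).
  case: (boolP (k * (x + 1) - r < y)) => h.
    rewrite IH //; try lia.
    have -> : m - (x + 1) = M%:Z by move: hM; rewrite PoszS; lia.
    by congr F; ring.
  rewrite Cnt_below // F_dneg //; lia.
have [ey|lty] := eqVneq y n.
  subst y; rewrite (@Cnt_out k r m n l x (n + 1)); last by apply/orP; right; lia.
  rewrite addr0 hX subrr.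
  rewrite !F_N0 //; nia.
rewrite hX IH //; try lia.
rewrite hM (@F_first k M (n - y) (y + r - 1 - k * x)); last by lia.
congr (_ + F _ _ _ _); ring.
Qed.
Lemma binz_diag E p : 1 <= E -> 0 <= p -> E * binz (E - 1) (p - 1) = p * binz E p.
Proof.
case: p => // [[|p]] hE _.
  by rewrite binz_negr // mulr0 mul0r.
case: E hE => // [[|e]] // _.
have -> : e.+1%:Z - 1 = e%:Z by rewrite PoszS addrK.
have -> : p.+1%:Z - 1 = p%:Z by rewrite PoszS addrK.
by rewrite !binz_nat -!PoszM mul_bin_diag.
Qed.

Lemma term_eq k p q : 0 <= k -> 1 <= q - k * p ->
  ((q - k * p)%:~R / (p + q)%:~R) * (binz (p + q) p)%:~R = (bet k p q)%:~R :> rat.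
Proof.
move=> hk hA.
case: (ltP p 0) => hp.
  by rewrite bet_negp // binz_negr // mulr0.
have hE : 1 <= p + q by nia.
have heq : (q - k * p) * binz (p + q) p = bet k p q * (p + q).
  rewrite /bet.
  have -> : (binz (p + q) p - (k + 1) * binz (p + q - 1) (p - 1)) * (p + q) =
    binz (p + q) p * (p + q) - (k + 1) * ((p + q) * binz (p + q - 1) (p - 1)) by ring.
  rewrite binz_diag //; ring.
rewrite mulrAC -intrM heq intrM mulfK // intr_eq0; lia.
Qed.

Lemma sum_tail (f : nat -> rat) n L : (n <= L)%N -> (forall i, (n <= i)%N -> f i = 0) ->
  \sum_(i < n) f i = \sum_(i < L) f i.
Proof.
move=> hL hz; rewrite (big_ord_widen L) // big_mkcond /=; apply: eq_bigr => i _.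
by case: ifP => // /negbT; rewrite -leqNgt => /hz ->.
Qed.
Theorem corollary2p1 (k r a b m n : int) :
  1 <= k -> 0 <= a -> a <= m -> Num.max 0 (k * a - r) < b -> b <= n ->
  k * m - r < n ->
  (#|Lpaths k r a b m n|)%:R =
  \sum_(0 <= i < `|((b + r - 1 - k * a) %/ (k + 1))%Z|.+1)
     (-1) ^+ i *
     ((n + r - k * m)%:~R / (m + n + r - (k + 1) * (a + i%:Z))%:~R) *
     (binz (m + n + r - (k + 1) * (a + i%:Z)) (m - a - i%:Z))%:~R *
     (binz (b + r - 1 - k * (a + i%:Z)) i%:Z)%:~R :> rat.
Proof.
move=> hk ha ham hb hbn hn.
have hb0 : 0 < b by move: hb; rewrite gt_max => /andP [].
have hb1 : k * a - r < b by move: hb; rewrite gt_max => /andP [].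
have hM : (absz (m - a)%R)%:Z = m - a by rewrite gez0_abs //; lia.
have hCnt : (#|Lpaths k r a b m n|)%:Z = F k (absz (m - a)%R) (n - b) (b + r - 1 - k * a).
  rewrite -(@Cnt_F k r m n hk hn (nsteps a b m n) a b) //.
  by rewrite /nsteps PoszD !gez0_abs //; lia.
have -> : (#|Lpaths k r a b m n|)%:R = ((F k (absz (m - a)%R) (n - b) (b + r - 1 - k * a))%:~R : rat).
  by rewrite -hCnt.
rewrite /F (big_morph _ (intrD _) (mulr0z 1)) big_mkord.
set D := `|((b + r - 1 - k * a) %/ (k + 1))%Z|%N.
set M := absz (m - a)%R.
set G := fun i : nat => (((-1) ^+ i * bet k (M%:Z - i%:Z) (n - b + (b + r - 1 - k * a) + 1 - k * i%:Z) *
   binz (b + r - 1 - k * a - k * i%:Z) i%:Z)%:~R : rat).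
have eqT : forall i : nat,
  (-1) ^+ i *
     ((n + r - k * m)%:~R / (m + n + r - (k + 1) * (a + i%:Z))%:~R) *
     (binz (m + n + r - (k + 1) * (a + i%:Z)) (m - a - i%:Z))%:~R *
     (binz (b + r - 1 - k * (a + i%:Z)) i%:Z)%:~R = G i.
  move=> i; rewrite /G !intrM intr_sign hM.
  have -> : n + r - k * m = (n - b + (b + r - 1 - k * a) + 1 - k * i%:Z) - k * (m - a - i%:Z) by ring.
  have -> : m + n + r - (k + 1) * (a + i%:Z) = (m - a - i%:Z) + (n - b + (b + r - 1 - k * a) + 1 - k * i%:Z) by ring.
  have -> : b + r - 1 - k * (a + i%:Z) = b + r - 1 - k * a - k * i%:Z by ring.
  rewrite -(mulrA _ (_ / _)) term_eq; last by lia.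
    by [].
  lia.
under [RHS]eq_bigr do rewrite eqT.
change (\sum_(i < M.+1) G i = \sum_(i < D.+1) G i).
rewrite (@sum_tail G M.+1 (M.+1 + D.+1)) ?leq_addr //; last first.
  move=> i hi; rewrite /G bet_negp ?mulr0 ?mul0r ?rmorph0 //.
  by move: hi; rewrite -ltz_nat; lia.
rewrite (@sum_tail G D.+1 (M.+1 + D.+1)) ?leq_addl //.
move=> i hi; rewrite /G binz_gt ?mulr0 ?rmorph0 //.
have hd : 0 <= b + r - 1 - k * a by lia.
have hD : D%:Z = ((b + r - 1 - k * a) %/ (k + 1))%Z by rewrite /D gez0_abs // divz_ge0 //; lia.
have : ((b + r - 1 - k * a) %/ (k + 1))%Z < i%:Z by rewrite -hD ltz_nat.
rewrite ltz_divLR; last by lia.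
nia.
Qed.
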